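(* For every real Banach space $X$ with $\dim X\ge 2$ and all $\alpha,\beta>0$, $$DW(X,\alpha,\beta)\ge(\alpha+\beta)\max\{\varepsilon_0(X),1\}.$$
   Context: For $\alpha,\beta>0$, $$DW(X,\alpha,\beta)=\sup\left\{\frac{\alpha\|x\|+\beta\|y\|}{\|x-y\|}\left\|\frac{x}{\|x\|}-\frac{y}{\|y\|}\right\|: x,y\in X\setminus\{0\},\ x\neq y\right\}.$$ The modulus of convexity is $\delta_X(\varepsilon)=\inf\{1-\|\tfrac12(x+y)\|: x,y\in S_X,\ \|x-y\|\ge\varepsilon\}$ for $\varepsilon\in[0,2]$, where $S_X$ is the unit sphere, and the characteristic of convexity is $\varepsilon_0(X)=\sup\{\varepsilon\in[0,2]:\delta_X(\varepsilon)=0\}$. *)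

(* Defs.v *)
From HB Require Import structures.
From mathcomp Require Import all_boot all_order all_algebra.
From mathcomp Require Import all_classical all_reals all_analysis.
Set Implicit Arguments. Unset Strict Implicit. Unset Printing Implicit Defensive.
Import Order.TTheory GRing.Theory Num.Theory.
Import numFieldNormedType.Exports.
Local Open Scope classical_set_scope.
Local Open Scope ring_scope.

Definition DW (R : realType) (X : normedModType R) (alpha beta : R) : \bar R :=
  ereal_sup [set r : \bar R | exists x y : X, [/\ x != 0, y != 0, x != y &
       r = ((alpha * `|x| + beta * `|y|) / `|x - y|
            * `| (`|x|^-1 *: x) - (`|y|^-1 *: y) |)%:E]].

Definition modconv (R : realType) (X : normedModType R) (eps : R) : \bar R :=
  ereal_inf [set r : \bar R | exists x y : X, [/\ `|x| = 1, `|y| = 1, eps <= `|x - y| &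
       r = (1 - `|2^-1 *: (x + y)|)%:E]].

Definition char_conv (R : realType) (X : normedModType R) : \bar R :=
  ereal_sup [set r : \bar R | exists eps : R, [/\ 0 <= eps <= 2, modconv X eps = 0%E & r = eps%:E]].

Definition dim_ge2 (R : realType) (X : normedModType R) : Prop :=
  exists x y : X, forall a b : R, a *: x + b *: y = 0 -> a = 0 /\ b = 0.

(* Main.v *)
Require Import Defs.
From HB Require Import structures.
From mathcomp Require Import all_boot all_order all_algebra.
From mathcomp Require Import all_classical all_reals all_analysis.
From mathcomp Require Import ring lra.
Import Order.TTheory GRing.Theory Num.Theory.
Import numFieldNormedType.Exports.
Local Open Scope ring_scope.
Lemma core (R : realType) (X : normedModType R) (alpha beta eps h : R) (x y : X) :
  0 < alpha -> 0 < beta -> 0 < h -> h <= 2^-1 -> h < eps -> eps <= 2 ->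
  `|x| = 1 -> `|y| = 1 -> eps <= `|x - y| ->
  1 - `|2^-1 *: (x + y)| < h ^+ 2 / 2 ->
  exists a b : X, [/\ a != 0, b != 0, a != b &
    (alpha + beta) * eps - 3 * h * (alpha + beta) <=
    (alpha * `|a| + beta * `|b|) / `|a - b| * `| (`|a|^-1 *: a) - (`|b|^-1 *: b) |].
Proof.
move=> ha hb h0 h2 he e2 nx ny exy hm.
set m := 2^-1 *: (x + y).
set a := (1 - h) *: x + h *: y.
set b := (1 - h) *: x.
have h1 : 0 < 1 - h by rewrite subr_gt0; apply: (le_lt_trans h2); rewrite invf_lt1 // ltr1n.
have nb : `|b| = 1 - h by rewrite normrZ nx mulr1 ger0_norm // ltW.
have ab : a - b = h *: y by rewrite /a /b addrAC subrr add0r.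
have nab : `|a - b| = h by rewrite ab normrZ ny mulr1 gtr0_norm.
have idm : a + (1 - 2 * h) *: y = (2 * (1 - h)) *: m.
  rewrite /m /a scalerA mulrAC mulfV ?pnatr_eq0 // mul1r scalerDr -addrA -scalerDl.
  congr (_ + _ *: _); rewrite mulr2n; lra.
have hm' : 1 - `|m| < h ^+ 2 / 2 by [].
clearbody m.
have h2' : 2 * h <= 1.
  by move: h2; rewrite -[h <= _](ler_pM2l (ltr0n R 2)) mulfV ?pnatr_eq0.
have Alow : 2 * (1 - h) * `|m| - (1 - 2 * h) <= `|a|.
  have := ler_normD a ((1 - 2 * h) *: y).
  rewrite idm !normrZ ny mulr1 !ger0_norm; lra.
have Alow2 : 1 - h ^+ 2 <= `|a| by nra.
have Aup : `|a| <= 1.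
  apply: (le_trans (ler_normD _ _)); rewrite !normrZ nx ny !mulr1 !ger0_norm ?subrK //; exact: ltW.
have Apos : 0 < `|a| by nra.
have nbx : `|b|^-1 *: b = x by rewrite nb /b scalerA mulVf ?scale1r // gt_eqF.
have ax : a - x = h *: (y - x).
  rewrite /a scalerBl scale1r scalerBr [_ - x]addrAC [x - _ - x]addrAC subrr add0r addrC //.
have nax : `|a - x| = h * `|x - y| by rewrite ax normrZ gtr0_norm // distrC.
have naa : `|a - `|a|^-1 *: a| = 1 - `|a|.
  rewrite -{1}[a]scale1r -scalerBl normrZ -[X in _ * X]gtr0_norm // -normrM.
  rewrite mulrBl mul1r mulVf ?gt_eqF // ler0_norm; lra.
have key : h * eps - (1 - `|a|) <= `| `|a|^-1 *: a - x|.
  have := ler_distD (`|a|^-1 *: a) a x; rewrite nax naa.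
  have : h * eps <= h * `|x - y| by rewrite ler_pM2l.
  lra.
have Nh : eps - h <= `| `|a|^-1 *: a - x| / h.
  rewrite ler_pdivlMr //; nra.
exists a, b; split.
- by rewrite -normr_gt0.
- by rewrite -normr_gt0 nb.
- by rewrite -subr_eq0 -normr_gt0 nab.
rewrite nbx nab nb.
have -> : forall P N : R, P / h * N = P * (N / h) by move=> P N; rewrite mulrAC -mulrA.
have F1 : (alpha + beta) * (1 - h) <= alpha * `|a| + beta * (1 - h).
  have Ah : 1 - h <= `|a| by nra.
  by rewrite mulrDl lerD2r ler_pM2l.
have := ler_pM _ _ F1 Nh.
have : 0 <= h * (2 - eps) * (alpha + beta) by apply: mulr_ge0; [apply: mulr_ge0|]; lra.
move=> H1 H2; apply: le_trans (H2 _ _); [nra| |]; nra.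
Qed.

Lemma elem {R : realType} {X : normedModType R} (alpha beta : R) {x y : X} :
  x != 0 -> y != 0 -> x != y ->
  (((alpha * `|x| + beta * `|y|) / `|x - y|
            * `| (`|x|^-1 *: x) - (`|y|^-1 *: y) |)%:E <= DW X alpha beta)%E.
Proof. by move=> hx hy hxy; apply: ereal_sup_ubound; exists x, y; split. Qed.

Theorem theorem1 (R : realType) (X : completeNormedModType R) (alpha beta : R) :
  dim_ge2 X -> 0 < alpha -> 0 < beta ->
  ((alpha + beta)%:E * maxe (char_conv X) 1%E <= DW X alpha beta)%E.
Proof.
move=> [x0 [y0 Hli]] ha hb.
have x0nz : x0 != 0.
  apply/eqP => E; have := Hli 1 0; rewrite E scaler0 scale0r addr0 => /(_ erefl) [].
  by move/eqP; rewrite oner_eq0.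
set u := `|x0|^-1 *: x0.
have nu : `|u| = 1.
  by rewrite normrZ ger0_norm ?invr_ge0 // mulVf // normr_eq0.
have ab0 : 0 < alpha + beta by lra.
have D1 : ((alpha + beta)%:E <= DW X alpha beta)%E.
  have unz : u != 0 by rewrite -normr_gt0 nu.
  have nuu : `|u - - u| = 2.
    by rewrite opprK -mulr2n -scaler_nat normrZ nu mulr1 ger0_norm.
  have uneq : u != - u by rewrite -subr_eq0 -normr_gt0 nuu.
  have munz : - u != 0 by rewrite oppr_eq0.
  have := elem alpha beta unz munz uneq.
  rewrite normrN nu nuu invr1 !scale1r !mulr1.
  by rewrite nuu divfK ?pnatr_eq0.
have ab0' : alpha + beta != 0 by rewrite gt_eqF.
have scale : forall r : R, (((alpha + beta) * r)%:E <= DW X alpha beta)%E ->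
    (r%:E <= ((alpha + beta)^-1)%:E * DW X alpha beta)%E.
  move=> r H; rewrite -[r](mulKf ab0') EFinM.
  apply: lee_wpmul2l => //; rewrite lee_fin invr_ge0; exact: ltW.
have core2 : forall eps, 1 < eps -> eps <= 2 -> modconv X eps = 0%E ->
    (((alpha + beta) * eps)%:E <= DW X alpha beta)%E.
  move=> eps e1 e2 Hmc; apply/lee_addgt0Pr => g g0.
  set h := Num.min 2^-1 (g / (3 * (alpha + beta))).
  have h2 : h <= 2^-1 by rewrite ge_min lexx.
  have hg : h <= g / (3 * (alpha + beta)) by rewrite ge_min lexx orbT.
  have h0 : 0 < h by rewrite lt_min invr_gt0 ltr0n divr_gt0 // mulr_gt0.
  have : (0%E < (h ^+ 2 / 2)%:E)%E by rewrite lte_fin divr_gt0 // exprn_gt0.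
  rewrite -Hmc /modconv.
  case/ereal_inf_lt => _ [x [y [nx ny exy ->]]]; rewrite lte_fin => hr.
  have h1 : 2^-1 < 1 :> R by rewrite invf_lt1 // ltr1n.
  have [a [b [an bn abn hv]]] := @core R X alpha beta eps h x y ha hb h0 h2 (ltac:(lra)) e2 nx ny exy hr.
  apply: le_trans (leeD2r _ (elem alpha beta an bn abn)); rewrite -EFinD lee_fin.
  move: hg; rewrite ler_pdivlMr ?mulr_gt0 // => hg.
  lra.
have Hcc : (char_conv X <= ((alpha + beta)^-1)%:E * DW X alpha beta)%E.
  apply: ge_ereal_sup => e [eps [/andP [e0 e2] Hmc ->]].
  apply: scale; case: (lerP eps 1) => e1; last exact: core2.
  apply: le_trans D1; rewrite lee_fin; nra.
rewrite maxe_pMr //; last by rewrite lee_fin ltW.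
rewrite ge_max mule1 D1 andbT.
have hp : (0%E <= (alpha + beta)%:E)%E by rewrite lee_fin ltW.
have := lee_wpmul2l hp Hcc.
by rewrite muleA -EFinM mulfV // mul1e.
Qed.
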